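(* For every $C\ge1$ and $\epsilon>0$ there is a polynomial $p$ such that every $C$-dense instance of MAXCUT with vertex set $V$ has at most $p(|V|)$ cuts that are $(1+\epsilon)$-locally stable.
   Context: An instance of MAXCUT is a finite vertex set $V$ and a symmetric function $w:V\times V\to[0,\infty)$ with zero diagonal whose support graph is connected. $\tau(x)=\sum_y w(x,y)$; the instance is $C$-dense if $w(x,y)\le C\frac{\tau(x)}{|V|}$ for all $x,y$. A cut is a partition $(S,\bar S)$ of $V$; $\xi(x)$ is the total weight of edges $xy$ crossing the cut and $\iota(x)=\tau(x)-\xi(x)$. A cut is $\gamma$-locally stable if $\xi(x)\ge\gamma\,\iota(x)$ for all $x\in V$. *)

(* Defs.v *)
From HB Require Import structures.
From mathcomp Require Import all_boot all_order all_algebra.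
From mathcomp Require Import reals.
Set Implicit Arguments. Unset Strict Implicit. Unset Printing Implicit Defensive.
Import Order.TTheory GRing.Theory Num.Theory.
Local Open Scope ring_scope.

Section MaxCut.
Variables (R : realType) (V : finType).
Implicit Types (w : V -> V -> R) (S : {set V}) (x y : V).

Definition support_rel w : rel V := fun x y => w x y != 0.

Definition maxcut_instance w : Prop :=
  [/\ (forall x y, 0 <= w x y),
      (forall x y, w x y = w y x),
      (forall x, w x x = 0)
    & (forall x y, connect (support_rel w) x y)].

Definition tau w x : R := \sum_(y : V) w x y.

Definition dense (C : R) w : Prop :=
  forall x y, w x y <= C * tau w x / #|V|%:R.

Definition xi w S x : R := \sum_(y : V | (y \in S) != (x \in S)) w x y.

Definition iota w S x : R := tau w x - xi w S x.

Definition locally_stable (gamma : R) w S : bool :=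
  [forall x, gamma * iota w S x <= xi w S x].

End MaxCut.

(* Main.v *)
Require Import Defs.
From HB Require Import structures.
From mathcomp Require Import all_boot all_order all_algebra.
From mathcomp Require Import reals.
From mathcomp Require Import ring lra.
Import Order.TTheory GRing.Theory Num.Theory.
Local Open Scope ring_scope.

Section Proof1.
Variables (R : realType) (V : finType) (w : V -> V -> R).

Definition sg (b : bool) : R := if b then 1 else -1.
Definition fld (T : {set V}) x : R := \sum_y w x y * sg (y \in T).

Lemma fld_sg S x : fld S x * sg (x \in S) = tau w x - 2 * xi w S x.
Proof.
rewrite /fld /tau /xi big_distrl /=.
rewrite (bigID (fun y => (y \in S) != (x \in S))) /=.
rewrite [X in X - _](bigID (fun y => (y \in S) != (x \in S))) /=.
have -> : \sum_(i | (i \in S) != (x \in S)) w x i * sg (i \in S) * sg (x \in S)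
   = - \sum_(i | (i \in S) != (x \in S)) w x i.
  rewrite -sumrN; apply: eq_bigr => y; rewrite /sg.
  by case: (y \in S); case: (x \in S) => //= _; ring.
have -> : \sum_(i | ~~ ((i \in S) != (x \in S))) w x i * sg (i \in S) * sg (x \in S)
   = \sum_(i | ~~ ((i \in S) != (x \in S))) w x i.
  apply: eq_bigr => y; rewrite /sg.
  by case: (y \in S); case: (x \in S) => //= _; ring.
ring.
Qed.

Lemma margin eps S x : 0 < eps -> locally_stable (1 + eps) w S ->
  (2 + eps) * (fld S x * sg (x \in S)) <= - (eps * tau w x).
Proof.
move=> he /forallP /(_ x); rewrite fld_sg /iota => h.
rewrite -subr_le0.
have -> : (2 + eps) * (tau w x - 2 * xi w S x) - - (eps * tau w x)
  = 2 * ((1 + eps) * (tau w x - xi w S x) - xi w S x) by ring.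
rewrite pmulr_rle0 ?subr_le0 //; lra.
Qed.

Hypothesis w0 : forall x y, 0 <= w x y.

Lemma pert S T x : `|fld T x - fld S x| <=
  2 * \sum_(y | (y \in T) != (y \in S)) w x y.
Proof.
rewrite /fld -sumrB big_distrr /= [X in _ <= X]big_mkcond /=.
apply: le_trans (ler_norm_sum _ _ _) _; apply: ler_sum => y _.
rewrite -mulrBr normrM ger0_norm // /sg.
case: (y \in T); case: (y \in S) => /=; rewrite ?subrr ?normr0 ?mulr0 //.
- rewrite opprK (_ : 1 + 1 = 2 :> R) //= ger0_norm //; lra.
- rewrite (_ : -1 - 1 = -2 :> R) ?normrN ?ger0_norm //; last by ring.
  by rewrite mulrC.
Qed.

Lemma sum_dense C (F : {set V}) x : dense C w ->
  \sum_(y | (y \in F)) w x y <= #|F|%:R * (C * tau w x / #|V|%:R).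
Proof.
move=> hd; apply: le_trans (_ : \sum_(y in F) (C * tau w x / #|V|%:R) <= _).
  by apply: ler_sum => y _; apply: hd.
by rewrite sumr_const mulr_natl.
Qed.



Definition Phi (T : {set V}) : {set V} := [set x | fld T x < 0].

Lemma decide (C eps : R) (S T : {set V}) (x : V) : 0 < eps -> dense C w -> locally_stable (1 + eps) w S ->
  0 < tau w x -> 0 < #|V|%:R :> R ->
  2 * C * (2 + eps) * #|[set y | (y \in T) != (y \in S)]|%:R < eps * #|V|%:R ->
  (x \in Phi T) = (x \in S).
Proof.
move=> he hd hs ht hn hF.
have hm := @margin eps S x he hs.
set F := [set y | (y \in T) != (y \in S)] in hF.
have hp : `|fld T x - fld S x| <= 2 * (#|F|%:R * (C * tau w x / #|V|%:R)).
  apply: le_trans (pert S T x) _; rewrite ler_pM2l //.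
  apply: le_trans (@sum_dense C F x hd).
  by rewrite le_eqVlt; apply/orP; left; apply/eqP; apply: eq_bigl => y; rewrite inE.
have hD : (2 + eps) * (2 * (#|F|%:R * (C * tau w x / #|V|%:R))) < eps * tau w x.
  have -> : (2 + eps) * (2 * (#|F|%:R * (C * tau w x / #|V|%:R)))
     = (2 * C * (2 + eps) * #|F|%:R) * tau w x / #|V|%:R by ring.
  rewrite ltr_pdivrMr //.
  have -> : eps * tau w x * #|V|%:R = eps * #|V|%:R * tau w x by ring.
  by rewrite ltr_pM2r.
set a := fld S x in hm hp; set b := fld T x in hp *.
have hs2 : sg (x \in S) * sg (x \in S) = 1 by rewrite /sg; case: (x \in S) => //; ring.
have key : (2 + eps) * (b * sg (x \in S)) < 0.
  have -> : b * sg (x \in S) = a * sg (x \in S) + (b - a) * sg (x \in S) by ring.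
  have hb : (b - a) * sg (x \in S) <= `|b - a|.
    apply: le_trans (ler_norm _) _; rewrite normrM /sg.
    by case: (x \in S); rewrite ?normrN normr1 mulr1.
  have h2 : (2 + eps) * ((b - a) * sg (x \in S)) <= (2 + eps) * `|b - a|.
    by rewrite ler_pM2l //; lra.
  have h3 : (2 + eps) * `|b - a| <= (2 + eps) * (2 * (#|F|%:R * (C * tau w x / #|V|%:R))).
    by rewrite ler_pM2l //; lra.
  rewrite mulrDr; lra.
rewrite inE; move: key; rewrite /sg; case: (x \in S).
  rewrite mulr1 pmulr_rlt0 //; lra.
rewrite mulrN1 pmulr_rlt0 ?oppr_lt0; last lra.
by move=> h; apply/negbTE; rewrite -leNgt ltW.
Qed.


Lemma sq_sum (a : V -> R) (c m : R) :
  \sum_y (c + a y - m) ^+ 2 =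
  #|V|%:R * (c - m) ^+ 2 + 2 * (c - m) * \sum_y a y + \sum_y a y ^+ 2.
Proof.
rewrite (eq_bigr (fun y => (c - m) ^+ 2 + 2 * (c - m) * a y + a y ^+ 2)); last first.
  by move=> y _; ring.
rewrite !big_split /= sumr_const -big_distrr /=.
by rewrite -[(c - m) ^+ 2 *+ _]mulr_natl.
Qed.

Lemma per_x (C : R) (S : {set V}) x (c : R) : dense C w -> 0 < #|V|%:R :> R ->
  \sum_y (c + #|V|%:R * (w x y * sg (y \in S)) - fld S x) ^+ 2 <=
  #|V|%:R * c ^+ 2 + #|V|%:R * C * tau w x ^+ 2.
Proof.
move=> hd hn.
rewrite sq_sum -big_distrr /=.
have -> : \sum_i w x i * sg (i \in S) = fld S x by [].
set n := #|V|%:R; set f := fld S x.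
have hsq : \sum_y (n * (w x y * sg (y \in S))) ^+ 2 <= n * C * tau w x ^+ 2.
  have -> : \sum_y (n * (w x y * sg (y \in S))) ^+ 2 = n ^+ 2 * \sum_y w x y ^+ 2.
    rewrite big_distrr /=; apply: eq_bigr => y _; rewrite /sg.
    by case: (y \in S); ring.
  have h1 : \sum_y w x y ^+ 2 <= \sum_y w x y * (C * tau w x / n).
    apply: ler_sum => y _; rewrite expr2 ler_wpM2l //; exact: hd.
  rewrite -big_distrl /= -/(tau w x) in h1.
  have -> : n * C * tau w x ^+ 2 = n ^+ 2 * (tau w x * (C * tau w x / n)).
    by field; apply: lt0r_neq0.
  by rewrite ler_pM2l // exprn_gt0.
have : 0 <= n * f ^+ 2 by apply: mulr_ge0; [exact: ltW | exact: sqr_ge0].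
set s2 := \sum_y _ in hsq *.
move=> h0.
have -> : n * (c - f) ^+ 2 + 2 * (c - f) * (n * f) + s2 = n * c ^+ 2 - n * f ^+ 2 + s2 by ring.
lra.
Qed.


Definition gK (K : seq V) (S : {set V}) x : R := \sum_(y <- K) w x y * sg (y \in S).
Definition Pot (K : seq V) (S : {set V}) : R :=
  \sum_x (#|V|%:R * gK K S x - (size K)%:R * fld S x) ^+ 2 / tau w x ^+ 2.

Lemma exists_le (f : V -> R) (M : R) : 0 < #|V|%:R :> R ->
  \sum_y f y <= #|V|%:R * M -> exists y, f y <= M.
Proof.
move=> hn hs; case: (pickP (fun y => f y <= M)) => [y hy|hall]; first by exists y.
exfalso.
have : \sum_(y : V) M < \sum_(y : V) f y.
  apply: ltr_sum.
    move: hn; rewrite ltr0n => /card_gt0P [y _].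
    by apply/hasP; exists y => //; rewrite mem_index_enum.
  by move=> y _; rewrite ltNge hall.
rewrite sumr_const -mulr_natl; lra.
Qed.

Lemma sampling (C : R) (S : {set V}) : dense C w -> 0 < #|V|%:R :> R ->
  (forall x, 0 < tau w x) ->
  forall k, exists K : seq V, size K = k /\ Pot K S <= k%:R * #|V|%:R * C.
Proof.
move=> hd hn ht; elim=> [|k [K [hK hP]]].
  exists [::]; split => //; rewrite /Pot big1 ?mul0r // => x _.
  by rewrite /gK big_nil /= mulr0 mul0r subrr expr0n mul0r.
set n := #|V|%:R in hP *.
have hsum : \sum_y Pot (y :: K) S <= n * (Pot K S + n * C).
  rewrite /Pot exchange_big /=.
  set c := fun x => n * gK K S x - (size K)%:R * fld S x.
  apply: (@le_trans _ _ (\sum_x (n * c x ^+ 2 / tau w x ^+ 2 + n * C))).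
    apply: ler_sum => x _.
    have htx : 0 < tau w x ^+ 2 by rewrite exprn_gt0.
    have -> : n * c x ^+ 2 / tau w x ^+ 2 + n * C
        = (n * c x ^+ 2 + n * C * tau w x ^+ 2) / tau w x ^+ 2.
      by field; apply: lt0r_neq0.
    rewrite -big_distrl /= ler_pM2r; last by rewrite invr_gt0.
    apply: le_trans (@per_x C S x (c x) hd hn).
    rewrite le_eqVlt; apply/orP; left; apply/eqP; apply: eq_bigr => y _.
    by rewrite /c /gK big_cons -/n /= -natr1; ring.
  rewrite /c /Pot -/n.
  rewrite big_split.
  rewrite /= sumr_const mulrDr big_distrr /=.
  rewrite -[n * C *+ _]mulr_natl le_eqVlt; apply/orP; left; apply/eqP.
  congr (_ + _).
  by apply: eq_bigr => x _; rewrite mulrA.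
have [y hy] := @exists_le (fun y => Pot (y :: K) S) _ hn hsum.
exists (y :: K); split; first by rewrite /= hK.
apply: le_trans hy _; rewrite -natr1; lra.
Qed.


Definition est (L : seq (V * bool)) x : R := \sum_(p <- L) w x p.1 * sg p.2.
Definition Gs (L : seq (V * bool)) : {set V} := [set x | est L x < 0].
Definition Dec (L : seq (V * bool)) : {set V} := Phi (Gs L).

Lemma est_map (K : seq V) (S : {set V}) x :
  est [seq (y, y \in S) | y <- K] x = gK K S x.
Proof. by rewrite /est big_map. Qed.

Lemma wrong_term (eps : R) (S : {set V}) (K : seq V) x : 0 < eps ->
  locally_stable (1 + eps) w S -> 0 < tau w x ->
  (x \in Gs [seq (y, y \in S) | y <- K]) != (x \in S) ->
  ((size K)%:R * eps) ^+ 2 <=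
  (2 + eps) ^+ 2 * ((#|V|%:R * gK K S x - (size K)%:R * fld S x) ^+ 2 / tau w x ^+ 2).
Proof.
move=> he hs ht hw.
have hm := @margin eps S x he hs.
set g := gK K S x in hw *; set f := fld S x in hm *.
set k := (size K)%:R; set n := #|V|%:R.
have hk : 0 <= k by rewrite /k ler0n.
have hn : 0 <= n by rewrite /n ler0n.
have hgs : 0 <= g * sg (x \in S).
  move: hw; rewrite inE est_map -/g /sg; case: (x \in S) => /=.
    by rewrite mulr1 leNgt; case: (g < 0).
  rewrite mulrN1 oppr_ge0; case: ltP => //= h _; exact: ltW.
have hs2 : sg (x \in S) ^+ 2 = 1 by rewrite /sg; case: (x \in S) => //; ring.
have key : k * eps * tau w x <= (2 + eps) * ((n * g - k * f) * sg (x \in S)).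
  have -> : (2 + eps) * ((n * g - k * f) * sg (x \in S))
     = (2 + eps) * n * (g * sg (x \in S)) - k * ((2 + eps) * (f * sg (x \in S))) by ring.
  have h1 : 0 <= (2 + eps) * n * (g * sg (x \in S)).
    apply: mulr_ge0 => //; apply: mulr_ge0 => //; lra.
  have h2 : k * ((2 + eps) * (f * sg (x \in S))) <= k * (- (eps * tau w x)).
    by rewrite ler_wpM2l.
  lra.
have h0 : 0 <= k * eps * tau w x.
  apply: mulr_ge0; [apply: mulr_ge0 => //; lra | exact: ltW].
have hsq : (k * eps * tau w x) ^+ 2 <= ((2 + eps) * ((n * g - k * f) * sg (x \in S))) ^+ 2.
  by rewrite ler_pXn2r // ?nnegrE //; apply: le_trans key.
have htx : 0 < tau w x ^+ 2 by rewrite exprn_gt0.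
have -> : (2 + eps) ^+ 2 * ((n * g - k * f) ^+ 2 / tau w x ^+ 2)
   = ((2 + eps) * ((n * g - k * f) * sg (x \in S))) ^+ 2 / tau w x ^+ 2.
  by rewrite !exprMn hs2 mulr1 mulrA.
rewrite ler_pdivlMr // -exprMn; exact: hsq.
Qed.


Lemma arith (a k e C n P : R) : 0 < k -> 0 < e -> 1 <= C -> 0 < n ->
  a * (k * e) ^+ 2 <= (2 + e) ^+ 2 * P -> P <= k * n * C ->
  2 * C ^+ 2 * (2 + e) ^+ 3 < k * e ^+ 3 ->
  2 * C * (2 + e) * a < e * n.
Proof.
move=> hk he hC hn h1 h2 h3.
have hA : 0 < (2 + e) ^+ 2 by rewrite exprn_gt0 //; lra.
have h4 : a * (k * e) ^+ 2 <= (2 + e) ^+ 2 * (k * n * C).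
  apply: le_trans h1 _; by rewrite ler_pM2l.
have h5 : a * k * e ^+ 2 <= (2 + e) ^+ 2 * n * C.
  rewrite -(ler_pM2l hk).
  have -> : k * (a * k * e ^+ 2) = a * (k * e) ^+ 2 by ring.
  have -> : k * ((2 + e) ^+ 2 * n * C) = (2 + e) ^+ 2 * (k * n * C) by ring.
  exact: h4.
have hCe : 0 < 2 * C * (2 + e) by apply: mulr_gt0; [apply: mulr_gt0|]; lra.
have h6 : 2 * C * (2 + e) * (a * k * e ^+ 2) <= 2 * C * (2 + e) * ((2 + e) ^+ 2 * n * C).
  by rewrite ler_pM2l.
have h7 : 2 * C * (2 + e) * ((2 + e) ^+ 2 * n * C) = (2 * C ^+ 2 * (2 + e) ^+ 3) * n by ring.
have h8 : (2 * C ^+ 2 * (2 + e) ^+ 3) * n < (k * e ^+ 3) * n by rewrite ltr_pM2r.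
have hke : 0 < k * e ^+ 2 by rewrite mulr_gt0 // exprn_gt0.
rewrite -(ltr_pM2r hke).
have -> : 2 * C * (2 + e) * a * (k * e ^+ 2) = 2 * C * (2 + e) * (a * k * e ^+ 2) by ring.
have -> : e * n * (k * e ^+ 2) = (k * e ^+ 3) * n by ring.
lra.
Qed.


Lemma reconstruct (C eps : R) (S : {set V}) (k : nat) :
  0 < eps -> 1 <= C -> dense C w -> locally_stable (1 + eps) w S ->
  0 < #|V|%:R :> R -> (forall x, 0 < tau w x) -> (0 < k)%N ->
  2 * C ^+ 2 * (2 + eps) ^+ 3 < k%:R * eps ^+ 3 ->
  exists L : seq (V * bool), size L = k /\ Dec L = S.
Proof.
move=> he hC hd hs hn ht hk hkb.
have [K [hK hP]] := @sampling C S hd hn ht k.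
set L := [seq (y, y \in S) | y <- K].
exists L; split; first by rewrite size_map.
set F := [set y | (y \in Gs L) != (y \in S)].
have hcount : #|F|%:R * (k%:R * eps) ^+ 2 <= (2 + eps) ^+ 2 * Pot K S.
  rewrite /Pot big_distrr /=.
  apply: (@le_trans _ _ (\sum_(x in F) (k%:R * eps) ^+ 2)).
    by rewrite sumr_const mulr_natl.
  apply: (@le_trans _ _ (\sum_(x in F) (2 + eps) ^+ 2 *
       ((#|V|%:R * gK K S x - (size K)%:R * fld S x) ^+ 2 / tau w x ^+ 2))).
    apply: ler_sum => x; rewrite inE => hx.
    by rewrite -hK; apply: wrong_term.
  rewrite [X in _ <= X](bigID (fun x => x \in F)) /= lerDl.
  apply: sumr_ge0 => x _; apply: mulr_ge0; first exact: sqr_ge0.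
  by apply: divr_ge0; exact: sqr_ge0.
have hF : 2 * C * (2 + eps) * #|F|%:R < eps * #|V|%:R.
  by apply: (@arith _ k%:R _ _ _ (Pot K S)) => //; rewrite ltr0n.
apply/setP => x; rewrite /Dec.
by apply: (@decide C eps S (Gs L) x).
Qed.


Lemma tau_pos x : (forall x y, connect (support_rel w) x y) -> (1 < #|V|)%N -> 0 < tau w x.
Proof.
move=> hc /card_gt1P [a [b [_ _ hab]]].
have [y hy] : exists y, y != x.
  case: (eqVneq a x) => [ea|na]; last by exists a.
  by exists b; rewrite -ea eq_sym.
move: (hc x y) => /connectP [p hp hl].
case: p hp hl => [|z p] /=; first by move=> _ e; rewrite e eqxx in hy.
move=> /andP [hz _] _.
have hwz : 0 < w x z by move: hz; rewrite /support_rel lt_def => ->; rewrite w0.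
rewrite /tau (bigD1 z) //=.
have : 0 <= \sum_(i | i != z) w x i by apply: sumr_ge0 => i _; exact: w0.
lra.
Qed.

End Proof1.

Theorem corollary1 (R : realType) (C eps : R) (hC : 1 <= C) (heps : 0 < eps) :
  exists p : {poly R},
    forall (V : finType) (w : V -> V -> R),
      maxcut_instance w -> dense C w ->
      #|[set S : {set V} | locally_stable (1 + eps) w S]|%:R
        <= p.[#|V|%:R].
Proof.
pose B := 2 * C ^+ 2 * (2 + eps) ^+ 3 / eps ^+ 3.
pose k := (Num.Def.archi_bound B).+1.
have he3 : 0 < eps ^+ 3 by rewrite exprn_gt0.
have hkB : 2 * C ^+ 2 * (2 + eps) ^+ 3 < k%:R * eps ^+ 3.
  have hB0 : 0 <= B.
    rewrite /B; apply: divr_ge0; last exact: ltW.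
    apply: mulr_ge0; [apply: mulr_ge0; [lra| exact: sqr_ge0] | apply: exprn_ge0; lra].
  have h1 := archi_boundP hB0.
  have h2 : B < k%:R by apply: lt_le_trans h1 _; rewrite ler_nat /k.
  by rewrite -ltr_pdivrMr.
exists ((2%:P * 'X) ^+ k + 2%:P) => V w [w0 wsym wdiag wconn] hd.
rewrite hornerD hornerC horner_exp hornerCM hornerX.
have h2n : 0 <= (2 * #|V|%:R) ^+ k :> R by apply: exprn_ge0; apply: mulr_ge0; rewrite ?ler0n.
case: (leqP #|V| 1) => hn1.
  have hsub : [set S : {set V} | locally_stable (1 + eps) w S] \subset powerset [set: V].
    by apply/subsetP => S _; rewrite powersetE subsetT.
  have := subset_leq_card hsub; rewrite card_powerset cardsT => hc.
  have hc2 : (#|[set S : {set V} | locally_stable (1 + eps) w S]| <= 2)%N.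
    apply: leq_trans hc _; case: #|V| hn1 => [|[|]] //.
  have : #|[set S : {set V} | locally_stable (1 + eps) w S]|%:R <= 2 :> R.
    by rewrite ler_nat.
  lra.
have hn : 0 < #|V|%:R :> R by rewrite ltr0n; apply: leq_trans hn1.
have ht : forall x, 0 < tau w x by move=> x; apply: (@tau_pos R V w w0).
have hsub : [set S : {set V} | locally_stable (1 + eps) w S] \subset
            [set @Dec R V w (tval t) | t : k.-tuple (V * bool)].
  apply/subsetP => S; rewrite inE => hs.
  have [L [hL hD]] := @reconstruct R V w w0 C eps S k heps hC hd hs hn ht isT hkB.
  have hL' : size L == k by apply/eqP.
  by apply/imsetP; exists (Tuple hL') => //; rewrite hD.
have := leq_trans (subset_leq_card hsub) (leq_imset_card _ _).
rewrite card_tuple card_prod card_bool => hc.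
have : #|[set S : {set V} | locally_stable (1 + eps) w S]|%:R <= (2 * #|V|%:R) ^+ k :> R.
  by rewrite -natrM -natrX ler_nat mulnC.
lra.
Qed.
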